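(* Let $G$ be a group with identity $e$, $A$ a set with at least two elements, and $\tau : A^G \to A^G$ a non-constant cellular automaton with minimal local map $\mu : A^S \to A$. Then $\tau$ is lazy if and only if $e \in S$ and $\mu$ has a unique active transition, i.e., there is exactly one $z \in A^S$ with $\mu(z) \neq z(e)$.
   Context: $A^G$ is the set of maps $G \to A$ with shift action $(g\cdot x)(h) := x(hg)$. A cellular automaton is a map $\tau : A^G \to A^G$ with a finite $S \subseteq G$ (a neighborhood) and local map $\mu : A^S \to A$ such that $\tau(x)(g) = \mu((g\cdot x)|_S)$ for all $x, g$. The minimal neighborhood of $\tau$ is the (unique) neighborhood of smallest cardinality, and the minimal local map is the local defining map on the minimal neighborhood. $\tau$ is lazy if there is a local defining map $\mu : A^S \to A$ for $\tau$ with $e \in S$ and $p \in A^S$ such that for all $z \in A^S$: $\mu(z) = z(e)$ iff $z \neq p$. An active transition of $\mu : A^S \to A$ (with $e \in S$) is a pattern $z \in A^S$ with $\mu(z) \neq z(e)$. *)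

(* Defs.v *)
From Stdlib Require Import List Arith.
Import ListNotations.


Definition finite_card {T : Type} (S : T -> Prop) (n : nat) : Prop :=
  exists l : list T, NoDup l /\ (forall g, S g <-> In g l) /\ length l = n.

Definition pattern {G : Type} (S : G -> Prop) (A : Type) : Type :=
  {g : G | S g} -> A.

Definition shift {G A : Type} (mul : G -> G -> G) (g : G) (x : G -> A) : G -> A :=
  fun h => x (mul h g).

Definition restr {G A : Type} (S : G -> Prop) (x : G -> A) : pattern S A :=
  fun s => x (proj1_sig s).

Definition is_local_map {G A : Type} (mul : G -> G -> G)
  (tau : (G -> A) -> (G -> A)) (S : G -> Prop) (mu : pattern S A -> A) : Prop :=
  forall (x : G -> A) (g : G), tau x g = mu (@restr G A S (shift mul g x)).

Definition neighborhood {G A : Type} (mul : G -> G -> G)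
  (tau : (G -> A) -> (G -> A)) (S : G -> Prop) : Prop :=
  (exists n, finite_card S n) /\ exists mu : pattern S A -> A, is_local_map mul tau S mu.

Definition cellular_automaton {G A : Type} (mul : G -> G -> G)
  (tau : (G -> A) -> (G -> A)) : Prop :=
  exists S : G -> Prop, neighborhood mul tau S.

Definition minimal_neighborhood {G A : Type} (mul : G -> G -> G)
  (tau : (G -> A) -> (G -> A)) (S : G -> Prop) : Prop :=
  neighborhood mul tau S /\
  exists n, finite_card S n /\
    forall (S' : G -> Prop) m, neighborhood mul tau S' -> finite_card S' m -> n <= m.

Definition lazy {G A : Type} (mul : G -> G -> G) (e : G)
  (tau : (G -> A) -> (G -> A)) : Prop :=
  exists (S : G -> Prop) (He : S e) (mu : pattern S A -> A) (p : pattern S A),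
    (exists n, finite_card S n) /\ is_local_map mul tau S mu /\
    forall z : pattern S A, mu z = z (exist _ e He) <-> z <> p.

Definition active_transition {G A : Type} (S : G -> Prop) (e : G) (He : S e)
  (mu : pattern S A -> A) (z : pattern S A) : Prop :=
  mu z <> z (exist _ e He).

(* Main.v *)
Require Import Defs.
From Stdlib Require Import List Arith Lia.
From Stdlib Require Import Classical ClassicalDescription FunctionalExtensionality ProofIrrelevance.

Definition dec (P : Prop) : {P} + {~ P} := excluded_middle_informative P.

Definition ext {G A : Type} (S : G -> Prop) (z : pattern S A) (d : G -> A) : G -> A :=
  fun g => match dec (S g) with left H => z (exist _ g H) | right _ => d g end.

Lemma ext_in {G A : Type} (S : G -> Prop) (z : pattern S A) d g (H : S g) :
  ext S z d g = z (exist _ g H).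
Proof.
  unfold ext; destruct (dec (S g)) as [H'|H']; [|contradiction].
  now rewrite (proof_irrelevance _ H' H).
Qed.

Lemma ext_out {G A : Type} (S : G -> Prop) (z : pattern S A) d g :
  ~ S g -> ext S z d g = d g.
Proof. unfold ext; destruct (dec (S g)); tauto. Qed.

Lemma restr_ext {G A : Type} (S : G -> Prop) (z : pattern S A) d :
  restr S (ext S z d) = z.
Proof.
  apply functional_extensionality; intros [g H]; unfold restr; simpl.
  apply ext_in.
Qed.

Lemma loc_agree {G A : Type} (mul : G -> G -> G) (e : G)
  (mulg1 : forall a, mul a e = a) tau S (mu : pattern S A -> A) :
  is_local_map mul tau S mu -> forall x y,
  (forall g, S g -> x g = y g) -> tau x e = tau y e.
Proof.
  intros Hl x y Hxy. rewrite !Hl. f_equal.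
  apply functional_extensionality; intros [g H]; unfold restr, shift; simpl.
  rewrite mulg1; auto.
Qed.

Lemma loc_e {G A : Type} (mul : G -> G -> G) (e : G)
  (mulg1 : forall a, mul a e = a) tau S (mu : pattern S A -> A) :
  is_local_map mul tau S mu -> forall x, tau x e = mu (restr S x).
Proof.
  intros Hl x. rewrite Hl. f_equal.
  apply functional_extensionality; intros [g H]; unfold restr, shift; simpl.
  now rewrite mulg1.
Qed.

Lemma tau_shift {G A : Type} (mul : G -> G -> G) (e : G)
  (mulg1 : forall a, mul a e = a) tau S (mu : pattern S A -> A) :
  is_local_map mul tau S mu -> forall x g, tau x g = tau (shift mul g x) e.
Proof.
  intros Hl x g. rewrite !Hl. f_equal.
  apply functional_extensionality; intros [h H]; unfold restr, shift; simpl.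
  now rewrite mulg1.
Qed.

Lemma inter_local {G A : Type} (mul : G -> G -> G) (e : G)
  (mulg1 : forall a, mul a e = a) tau S1 S2 (mu1 : pattern S1 A -> A)
  (mu2 : pattern S2 A -> A) (d : G -> A) :
  is_local_map mul tau S1 mu1 -> is_local_map mul tau S2 mu2 ->
  is_local_map mul tau (fun g => S1 g /\ S2 g)
    (fun w => tau (ext (fun g => S1 g /\ S2 g) w d) e).
Proof.
  intros H1 H2 x g. rewrite (tau_shift mul e mulg1 tau S1 mu1 H1).
  set (y := shift mul g x).
  set (w := ext (fun g => S1 g /\ S2 g) (restr (fun g => S1 g /\ S2 g) y) d).
  set (v := fun h => if dec (S1 h) then y h else w h).
  transitivity (tau v e).
  - apply (loc_agree mul e mulg1 tau S1 mu1 H1). intros h Hh. unfold v.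
    destruct (dec (S1 h)); tauto.
  - apply (loc_agree mul e mulg1 tau S2 mu2 H2). intros h Hh. unfold v.
    destruct (dec (S1 h)); auto.
    unfold w. rewrite (ext_in (fun g => S1 g /\ S2 g) _ _ _ (conj s Hh)). reflexivity.
Qed.

Lemma min_sub {G A : Type} (mul : G -> G -> G) (e : G)
  (mulg1 : forall a, mul a e = a) (tau : (G -> A) -> (G -> A)) S S' (mu' : pattern S' A -> A)
  (d : G -> A) :
  minimal_neighborhood mul tau S -> is_local_map mul tau S' mu' ->
  forall g, S g -> S' g.
Proof.
  intros [[_ [mu Hmu]] [n [[l [Hnd [Hl Hlen]]] Hmin]]] Hl' g Hg.
  apply NNPP; intro Hng.
  set (f := fun h => if dec (S' h) then true else false).
  assert (Hc : finite_card (fun g => S g /\ S' g) (length (filter f l))).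
  { exists (filter f l). split; [apply NoDup_filter; auto|split; auto].
    intro h. rewrite filter_In, <- Hl. unfold f. destruct (dec (S' h)); intuition discriminate. }
  assert (Hn : neighborhood mul tau (fun g => S g /\ S' g)).
  { split; [eauto|]. eexists. apply (inter_local mul e mulg1 tau S S' mu mu' d Hmu Hl'). }
  specialize (Hmin _ _ Hn Hc).
  assert (Hlt : length (filter f l) <> length l).
  { intro Heq. apply filter_length_forallb in Heq. rewrite forallb_forall in Heq.
    specialize (Heq g (proj1 (Hl g) Hg)). unfold f in Heq.
    destruct (dec (S' g)); [contradiction|discriminate]. }
  pose proof (filter_length_le f l). lia.
Qed.

Theorem proposition1
  (G : Type) (mul : G -> G -> G) (e : G) (inv : G -> G)
  (mulA : forall a b c, mul a (mul b c) = mul (mul a b) c)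
  (mul1g : forall a, mul e a = a) (mulg1 : forall a, mul a e = a)
  (mulVg : forall a, mul (inv a) a = e)
  (A : Type) (A2 : exists a b : A, a <> b)
  (tau : (G -> A) -> (G -> A)) (S : G -> Prop) (mu : pattern S A -> A)
  (HS : minimal_neighborhood mul tau S) (Hmu : is_local_map mul tau S mu)
  (Hnc : exists x y : G -> A, tau x <> tau y) :
  lazy mul e tau <->
  exists He : S e, exists! z : pattern S A, active_transition S e He mu z.
Proof.
  split.
  - intros [S' [He' [mu' [p [Hfin [Hl' Hlaz]]]]]].
    destruct A2 as [a [b Hab]].
    set (d := fun _ : G => a).
    pose proof (min_sub mul e mulg1 tau S S' mu' d HS Hl') as Hsub.
    assert (He : S e).
    { apply NNPP; intro HnS.
      destruct (classic (exists s, S' s /\ s <> e)) as [[s [Hs Hse]]|Hno].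
      - set (q := if dec (a = p (exist _ s Hs)) then b else a).
        assert (Hq : q <> p (exist _ s Hs)).
        { unfold q; destruct (dec (a = p (exist _ s Hs))); congruence. }
        set (X := ext S' p d).
        set (xc := fun (c : A) h => if dec (h = e) then c else if dec (h = s) then q else X h).
        assert (tc : forall c, tau (xc c) e = c).
        { intro c. rewrite (loc_e mul e mulg1 tau S' mu' Hl').
          assert (Hne : restr S' (xc c) <> p).
          { intro Heq. pose proof (f_equal (fun z => z (exist _ s Hs)) Heq) as Hf.
            simpl in Hf. unfold restr, xc in Hf; simpl in Hf.
            destruct (dec (s = e)); [contradiction|].
            destruct (dec (s = s)); [|contradiction]. apply Hq; exact Hf. }
          apply Hlaz in Hne. rewrite Hne. unfold restr, xc; simpl.
          destruct (dec (e = e)); [reflexivity|contradiction]. }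
        apply Hab. rewrite <- (tc a), <- (tc b).
        apply (loc_agree mul e mulg1 tau S mu Hmu). intros h Hh. unfold xc.
        destruct (dec (h = e)); [subst; contradiction|reflexivity].
      - destruct Hnc as [x [y Hxy]]. apply Hxy.
        apply functional_extensionality; intro g.
        rewrite (tau_shift mul e mulg1 tau S mu Hmu x), (tau_shift mul e mulg1 tau S mu Hmu y).
        set (x0 := shift mul g x). set (y0 := shift mul g y).
        set (w := fun h => if dec (h = e) then y0 h else x0 h).
        transitivity (tau w e).
        + apply (loc_agree mul e mulg1 tau S mu Hmu). intros h Hh. unfold w.
          destruct (dec (h = e)); [subst; contradiction|reflexivity].
        + apply (loc_agree mul e mulg1 tau S' mu' Hl'). intros h Hh. unfold w.
          destruct (dec (h = e)); [reflexivity|].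
          exfalso; apply Hno; eauto. }
    exists He.
    set (X0 := ext S' p d).
    assert (Hp : mu' p <> p (exist _ e He')).
    { intro Heq. apply Hlaz in Heq. apply Heq; reflexivity. }
    assert (key : forall z, active_transition S e He mu z ->
              forall s (Hs : S s), z (exist _ s Hs) = p (exist _ s (Hsub s Hs))).
    { intros z Hz s Hs. unfold active_transition in Hz.
      set (X := ext S z X0).
      assert (HX : restr S' X = p).
      { apply NNPP; intro Hne. apply Hz.
        rewrite <- (restr_ext S z X0). fold X.
        rewrite <- (loc_e mul e mulg1 tau S mu Hmu).
        rewrite (loc_e mul e mulg1 tau S' mu' Hl').
        apply Hlaz in Hne. rewrite Hne. unfold restr, X; simpl.
        rewrite (ext_in S z X0 e He). reflexivity. }
      rewrite <- HX. unfold restr, X; simpl.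
      rewrite (ext_in S z X0 s Hs). reflexivity. }
    exists (restr S X0). split.
    + unfold active_transition.
      rewrite <- (loc_e mul e mulg1 tau S mu Hmu).
      rewrite (loc_e mul e mulg1 tau S' mu' Hl'). unfold X0. rewrite restr_ext.
      unfold restr; simpl. rewrite (ext_in S' p d e He'). exact Hp.
    + intros z Hz. apply functional_extensionality; intros [s Hs].
      rewrite (key z Hz s Hs). unfold restr, X0; simpl.
      apply ext_in.
  - intros [He [z0 [Hz0 Huniq]]].
    exists S, He, mu, z0.
    destruct HS as [_ [n [Hn _]]].
    split; [eauto|split; [exact Hmu|]].
    intro z; split.
    + intros Heq Hz. subst. apply Hz0; exact Heq.
    + intro Hne. apply NNPP; intro Hact. apply Hne; symmetry; apply Huniq; exact Hact.
Qed.
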